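(* The functions $f_k(z)=(1-z)\sum_{j=0}^{\infty}\frac{1}{(j+1)^k}z^j=1+\sum_{j=1}^\infty\left(\frac{1}{(j+1)^k}-\frac{1}{j^k}\right)z^j$, $k\in\mathbb{N}$ ($k\geq1$), span a dense subspace of $H^2$.
   Context: $H^2$ denotes the Hardy space of analytic functions $f(z)=\sum_{j\ge0}\hat f(j)z^j$ on the open unit disk with $\|f\|^2=\sum_{j}|\hat f(j)|^2<\infty$. *)

(* Defs.v *)
From HB Require Import structures.
From mathcomp Require Import all_boot all_order all_algebra.
From mathcomp Require Import all_classical all_reals all_analysis.
From mathcomp Require Import complex.
Set Implicit Arguments. Unset Strict Implicit. Unset Printing Implicit Defensive.
Import Order.TTheory GRing.Theory Num.Theory.
Import numFieldNormedType.Exports.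
Local Open Scope ring_scope.

Definition sqmod (R : realType) (z : R[i]) : R :=
  (complex.Re z) ^+ 2 + (complex.Im z) ^+ 2.

(* An element of H^2 is identified with its Taylor coefficient sequence
   (f(z) = sum_j a j z^j); membership: sum_j |a j|^2 < oo. *)
Definition inH2 (R : realType) (a : nat -> R[i]) : Prop :=
  cvgn (series (fun j => sqmod (a j))).

Definition H2norm2 (R : realType) (a : nat -> R[i]) : R :=
  limn (series (fun j => sqmod (a j))).

(* Taylor coefficients of f_k(z) = (1 - z) * sum_j z^j / (j+1)^k :
   coefficient j is 1/(j+1)^k - 1/j^k for j >= 1, and 1 for j = 0. *)
Definition fk_coef (R : realType) (k j : nat) : R[i] :=
  ((((j.+1)%:R ^+ k)^-1 : R) - (if j is j'.+1 then (((j'.+1)%:R ^+ k)^-1 : R) else 0))%:C%C.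

(* Main.v *)
Require Import Defs.
From HB Require Import structures.
From mathcomp Require Import all_boot all_order all_algebra.
From mathcomp Require Import all_classical all_reals all_analysis.
From mathcomp Require Import complex.
From mathcomp Require Import ring lra zify.
Import Order.TTheory GRing.Theory Num.Theory.

Set Implicit Arguments. Unset Strict Implicit. Unset Printing Implicit Defensive.
Local Open Scope ring_scope.

Section Aux.
Variable R : realType.
Local Notation C := R[i].

Lemma sqmodD (a b : C) : sqmod (a + b) <= 2 * sqmod a + 2 * sqmod b.
Proof. case: a => a1 a2; case: b => b1 b2; rewrite /sqmod /=.
have := sqr_ge0 (a1 - b1); have := sqr_ge0 (a2 - b2). nra. Qed.
Lemma sqmodM (a b : C) : sqmod (a * b) = sqmod a * sqmod b.
Proof. case: a => a1 a2; case: b => b1 b2; rewrite /sqmod /=. ring. Qed.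
Lemma sqmodN (a : C) : sqmod (- a) = sqmod a.
Proof. case: a => a1 a2; rewrite /sqmod /=. ring. Qed.
Lemma sqmod_ge0 (a : C) : 0 <= sqmod a.
Proof. case: a => a1 a2; rewrite /sqmod /=. nra. Qed.
Lemma sqmodC (x : R) : sqmod (x%:C)%C = x ^+ 2.
Proof. rewrite /sqmod /=. ring. Qed.
Lemma sqmod0 : sqmod (0 : C) = 0.
Proof. rewrite /sqmod /=. ring. Qed.

Definition psum (a : nat -> C) (N : nat) : R := \sum_(j < N) sqmod (a j).
Definition small (a : nat -> C) (e : R) := forall N, psum a N <= e.

Lemma small_add a b e1 e2 : small a e1 -> small b e2 ->
  small (fun j => a j + b j) (2 * e1 + 2 * e2).
Proof.
move=> ha hb N; rewrite /psum.
apply: le_trans; first by apply: ler_sum => j _; exact: sqmodD.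
rewrite big_split /= -!mulr_sumr lerD // ler_wpM2l //; [exact: ha | exact: hb].
Qed.

Lemma small_scale a e c : small a e -> small (fun j => c * a j) (sqmod c * e).
Proof.
move=> ha N; rewrite /psum.
under eq_bigr do rewrite sqmodM.
by rewrite -mulr_sumr ler_wpM2l ?sqmod_ge0 //; apply: ha.
Qed.

Lemma small_le a e e' : e <= e' -> small a e -> small a e'.
Proof. by move=> le ha N; apply: le_trans (ha N) le. Qed.

Lemma small_ext a b e : (forall j, a j = b j) -> small a e -> small b e.
Proof. by move=> eab ha N; rewrite /psum; under eq_bigr do rewrite -eab; apply: ha. Qed.

Lemma small_N a e : small a e -> small (fun j => - a j) e.
Proof. by move=> ha N; rewrite /psum; under eq_bigr do rewrite sqmodN; apply: ha. Qed.

Definition Dop (a : nat -> C) (j : nat) : C :=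
  a j - (if j is j'.+1 then a j' else 0).

Lemma small_D a e : small a e -> small (Dop a) (4 * e).
Proof.
move=> ha N; rewrite /psum.
have -> : 4 * e = 2 * e + 2 * e by ring.
apply: le_trans; first by apply: ler_sum => j _; exact: sqmodD.
rewrite big_split /= -!mulr_sumr lerD // ler_wpM2l //; first exact: ha.
case: N => [|N]; first by rewrite big_ord0; apply: le_trans (ha 0%N); rewrite /psum big_ord0.
rewrite big_ord_recl /= sqmodN sqmod0 add0r.
under eq_bigr do rewrite sqmodN.
apply: le_trans (ha N.+1); rewrite /psum big_ord_recr /= lerDl sqmod_ge0 //.
Qed.


Definition U (k j : nat) : R := ((j.+1)%:R ^+ k)^-1.
Definition inSpan (v : nat -> C) := exists n (c : nat -> C),
  v = fun j => \sum_(i < n) c i * (U i.+1 j)%:C%C.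
Definition Approx (w : nat -> C) := forall e, 0 < e ->
  exists v, inSpan v /\ small (fun j => w j - v j) e.

Lemma sum_widen (n m : nat) (F : nat -> C) : (n <= m)%N ->
  \sum_(i < n) F i = \sum_(i < m) (if (i < n)%N then F i else 0).
Proof. by move=> nm; rewrite (big_ord_widen m F nm) big_mkcond. Qed.

Lemma inSpan_add v1 v2 : inSpan v1 -> inSpan v2 -> inSpan (fun j => v1 j + v2 j).
Proof.
move=> [n1 [c1 ->]] [n2 [c2 ->]].
exists (n1 + n2)%N, (fun i => (if (i < n1)%N then c1 i else 0) + (if (i < n2)%N then c2 i else 0)).
apply: funext => j.
rewrite (@sum_widen _ _ (fun i => c1 i * (U i.+1 j)%:C%C) (leq_addr n2 n1)) (@sum_widen _ _ (fun i => c2 i * (U i.+1 j)%:C%C) (leq_addl n1 n2)) -big_split /=.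
apply: eq_bigr => i _; rewrite mulrDl; congr (_ + _); by case: ifP; rewrite ?mul0r.
Qed.

Lemma inSpan_scale v a : inSpan v -> inSpan (fun j => a * v j).
Proof.
move=> [n [c ->]]; exists n, (fun i => a * c i); apply: funext => j.
by rewrite mulr_sumr; apply: eq_bigr => i _; rewrite mulrA.
Qed.

Lemma inSpan0 : inSpan (fun _ => 0).
Proof. by exists 0%N, (fun _ => 0); apply: funext => j; rewrite big_ord0. Qed.

Lemma inSpan_single k : inSpan (fun j => (U k.+1 j)%:C%C).
Proof.
exists k.+1, (fun i => if i == k then 1 else 0); apply: funext => j.
rewrite big_ord_recr /= eqxx mul1r big1 ?add0r // => i _.
by rewrite (ltn_eqF (ltn_ord i)) mul0r.
Qed.

Lemma Approx_span v : inSpan v -> Approx v.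
Proof.
move=> hv e he; exists v; split => // N; rewrite /psum.
by rewrite big1 ?ltW // => j _; rewrite subrr sqmod0.
Qed.

Lemma Approx_add a b : Approx a -> Approx b -> Approx (fun j => a j + b j).
Proof.
move=> ha hb e he.
have he4 : 0 < e / 4 by rewrite divr_gt0.
have [va [sa ma]] := ha _ he4; have [vb [sb mb]] := hb _ he4.
exists (fun j => va j + vb j); split; first exact: inSpan_add.
apply: (small_le (e := 2 * (e / 4) + 2 * (e / 4))); first by lra.
eapply small_ext; last exact: (small_add ma mb).
move=> j /=; ring.
Qed.

Lemma Approx_scale a c : Approx a -> Approx (fun j => c * a j).
Proof.
move=> ha e he.
have hc : 0 < sqmod c + 1 by have := sqmod_ge0 c; lra.
have he' : 0 < e / (sqmod c + 1) by rewrite divr_gt0.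
have [v [sv mv]] := ha _ he'.
exists (fun j => c * v j); split; first exact: inSpan_scale.
apply: (small_le (e := sqmod c * (e / (sqmod c + 1)))).
  have := sqmod_ge0 c; rewrite mulrA ler_pdivrMr //; nra.
eapply small_ext; last exact: (small_scale c mv).
move=> j /=; ring.
Qed.

Lemma Approx0 : Approx (fun _ => 0).
Proof. exact: (Approx_span inSpan0). Qed.

Lemma Approx_sum (P : nat) (F : nat -> nat -> C) :
  (forall i, (i < P)%N -> Approx (F i)) -> Approx (fun j => \sum_(i < P) F i j).
Proof.
elim: P => [|P IH] hF.
  by under [fun j => _]funext do rewrite big_ord0; exact: Approx0.
under [fun j => _]funext do rewrite big_ord_recr.
apply: Approx_add; first by apply: IH => i iP; apply: hF; exact: ltnW.
exact: hF.
Qed.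

Lemma Approx_close w : (forall e, 0 < e -> exists x, Approx x /\ small (fun j => w j - x j) e) ->
  Approx w.
Proof.
move=> hw e he.
have he4 : 0 < e / 4 by rewrite divr_gt0.
have [x [ax mx]] := hw _ he4.
have [v [sv mv]] := ax _ he4.
exists v; split => //.
apply: (small_le (e := 2 * (e / 4) + 2 * (e / 4))); first by lra.
eapply small_ext; last exact: (small_add mx mv).
move=> j /=; ring.
Qed.

Definition ee (m j : nat) : C := if j == m then 1 else 0.

Lemma sum_ee (P j : nat) (F : nat -> C) :
  \sum_(i < P) F i * ee i j = if (j < P)%N then F j else 0.
Proof.
elim: P => [|P IH]; first by rewrite big_ord0.
rewrite big_ord_recr /= IH /ee ltnS.
case: (eqVneq j P) => [->|ne]; first by rewrite ltnn leqnn add0r mulr1.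
by rewrite mulr0 addr0 ltn_neqAle ne.
Qed.

Lemma key_inv (x : R) : 0 < x -> ((x + 1) ^+ 2)^-1 <= x^-1 - (x + 1)^-1.
Proof.
move=> x0.
have x1 : 0 < x + 1 by lra.
have -> : x^-1 - (x + 1)^-1 = (x * (x + 1))^-1.
  by field; apply/andP; split; rewrite gt_eqF.
rewrite lef_pV2 ?posrE ?exprn_gt0 ?mulr_gt0 //; nra.
Qed.

Lemma tele (m N : nat) :
  \sum_(j < N) (if (m < j)%N then ((j.+1)%:R ^+ 2)^-1 else 0 : R)
    <= (m.+1)%:R^-1 - ((maxn N m.+1)%:R)^-1.
Proof.
elim: N => [|N IH]; first by rewrite big_ord0 max0n subrr.
rewrite big_ord_recr /=.
case: (ltnP m N) => hmN.
  have e1 : maxn N m.+1 = N by apply/maxn_idPl.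
  have e2 : maxn N.+1 m.+1 = N.+1 by apply/maxn_idPl; exact: ltnW.
  rewrite e1 in IH; rewrite e2.
  have N0 : 0 < (N%:R : R) by rewrite ltr0n; exact: leq_ltn_trans hmN.
  rewrite -natr1; apply: le_trans (lerD IH (key_inv N0)) _; by rewrite addrA subrK.
have e3 : maxn N m.+1 = m.+1.
 by apply/maxn_idPr; exact: leqW.
have e4 : maxn N.+1 m.+1 = m.+1 by apply/maxn_idPr.
by rewrite e3 in IH; rewrite e4 addr0.
Qed.

Definition tailK (m K j : nat) : C :=
  if (m < j)%N then (((m.+1)%:R ^+ K * U K j)%:C)%C else 0.

Lemma term_bound (m M j : nat) : (m < j)%N ->
  sqmod (tailK m M.+1 j) <=
  (((m.+1)%:R / (m.+2)%:R) ^+ 2) ^+ M * (m.+1)%:R ^+ 2 * ((j.+1)%:R ^+ 2)^-1.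
Proof.
move=> mj; rewrite /tailK mj sqmodC /U.
set a : R := (m.+1)%:R; set b : R := (j.+1)%:R; set q : R := a / (m.+2)%:R.
have a0 : 0 < a by rewrite ltr0n.
have b0 : 0 < b by rewrite ltr0n.
have rq : a / b <= q.
  rewrite /q ler_wpM2l ?(ltW a0) // lef_pV2 ?posrE ?ltr0n // ler_nat; exact: mj.
have r0 : 0 <= a / b by rewrite divr_ge0 // ltW.
have -> : a ^+ M.+1 * (b ^+ M.+1)^-1 = (a / b) ^+ M.+1 by rewrite exprMn exprVn.
rewrite -exprM mulnC exprM exprS.
rewrite -mulrA -expr_div_n [X in _ <= X]mulrC ler_wpM2l ?exprn_ge0 //.
have q0 : 0 <= q by apply: le_trans rq.
have h1 : (a / b) ^+ 2 <= q ^+ 2.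
  by have := @lerXn2r R 2 (a / b) q; rewrite !nnegrE; apply.
by have := @lerXn2r R M ((a / b) ^+ 2) (q ^+ 2); rewrite !nnegrE !sqr_ge0; apply.
Qed.

Lemma tail_small (m : nat) (eta : R) : 0 < eta ->
  exists K, small (tailK m K.+1) eta.
Proof.
move=> he.
set a : R := (m.+1)%:R; set z : R := (a / (m.+2)%:R) ^+ 2.
have a0 : 0 < a by rewrite ltr0n.
have z0 : 0 <= z by rewrite sqr_ge0.
have z1 : `|z| < 1.
  rewrite ger0_norm // /z expr_div_n ltr_pdivrMr ?exprn_gt0 ?ltr0n // mul1r.
  by rewrite ltr_pXn2r ?nnegrE ?ler0n // ltr_nat.
have ea : 0 < eta / a by rewrite divr_gt0.
have := cvg_geometric 1 z1.
move/(cvgrPdist_le _ _) => /(_ _ ea) [M _ HM].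
have zM : z ^+ M <= eta / a.
  by have := HM M (leqnn M); rewrite /= sub0r normrN mul1r ger0_norm // exprn_ge0.
exists M => N; rewrite /psum.
apply: (@le_trans _ _ (\sum_(j < N) (z ^+ M * a ^+ 2 *
    (if (m < j)%N then ((j.+1)%:R ^+ 2)^-1 else 0)))).
  apply: ler_sum => j _; case: ifP => mj.
    exact: term_bound.
  by rewrite /tailK mj sqmod0 mulr0.
rewrite -mulr_sumr.
have c0 : 0 <= z ^+ M * a ^+ 2 := mulr_ge0 (exprn_ge0 M z0) (sqr_ge0 a).
apply: le_trans (ler_wpM2l c0 (tele m N)) _.
apply: (@le_trans _ _ (z ^+ M * a ^+ 2 * a^-1)).
  rewrite ler_wpM2l // gerBl invr_ge0 ler0n //.
rewrite expr2 mulrA mulrK ?unitfE ?gt_eqF //.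
by rewrite -ler_pdivlMr.
Qed.

Lemma Approx_ext a b : (forall j, a j = b j) -> Approx a -> Approx b.
Proof. by move=> eab; have -> : a = b by apply: funext. Qed.

Lemma Approx_ee m : Approx (ee m).
Proof.
elim/ltn_ind: m => m IH.
apply: Approx_close => e he.
have [K hK] := tail_small m he.
set u := fun j => (((m.+1)%:R ^+ K.+1 * U K.+1 j)%:C)%C.
exists (fun j => u j + (-1) * \sum_(i < m) u i * ee i j); split.
  apply: Approx_add.
    apply: Approx_span.
    have := inSpan_scale (((m.+1)%:R ^+ K.+1)%:C)%C (inSpan_single K).
    suff -> : u = (fun j => (((m.+1)%:R ^+ K.+1)%:C)%C * (U K.+1 j)%:C%C) by [].
    by apply: funext => j; rewrite /u rmorphM.
  apply: Approx_scale; apply: (Approx_sum (F := fun i j => u i * ee i j)) => i im.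
  exact: (Approx_scale (u i) (IH i im)).
eapply small_ext; last exact: (small_N hK).
move=> j /=; rewrite sum_ee /tailK /ee.
have um : u m = 1.
  by rewrite /u /U mulfV ?expf_neq0 ?pnatr_eq0.
case: (ltngtP j m) => [jm|mj|->].
- by rewrite mulN1r subrr subr0 oppr0.
- by rewrite mulr0 addr0 sub0r.
- by rewrite mulr0 addr0 um subrr oppr0.
Qed.

Lemma Approx_fin (w : nat -> C) (P : nat) : (forall j, (P <= j)%N -> w j = 0) -> Approx w.
Proof.
move=> hw.
apply: (Approx_ext (a := fun j => \sum_(i < P) w i * ee i j)).
  move=> j; rewrite sum_ee; case: ltnP => // Pj; by rewrite hw.
apply: (Approx_sum (F := fun i j => w i * ee i j)) => i _.
exact: Approx_scale (Approx_ee i).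
Qed.

End Aux.

Import numFieldNormedType.Exports.
Section B.
Variable R : realType.
Local Notation C := R[i].
Import numFieldNormedType.Exports.
Lemma H2_lt (x : nat -> C) (e eps : R) : small x e -> e < eps -> H2norm2 x < eps.
Proof.
move=> hx lt.
have hs : forall n, series (fun j => sqmod (x j)) n = psum x n.
  by move=> n; rewrite /series /= big_mkord.
have nd : {homo series (fun j => sqmod (x j)) : n m / (n <= m)%N >-> n <= m}.
  by apply: nondecreasing_series => n _ _; exact: sqmod_ge0.
have cv : cvgn (series (fun j => sqmod (x j))).
  apply: nondecreasing_is_cvgn => //; exists e => y [n _ <-]; rewrite hs; exact: hx.
apply: le_lt_trans lt; rewrite /H2norm2.
apply: limr_le => //; apply: nearW => n; rewrite hs; exact: hx.
Qed.


Lemma tail_sum (f : nat -> R) (M N : nat) : (M <= N)%N ->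
  \sum_(j < N) (if (M <= j)%N then f j else 0) = \sum_(j < N) f j - \sum_(j < M) f j.
Proof.
elim: N => [|N IH] MN.
  by move: MN; rewrite leqn0 => /eqP ->; rewrite !big_ord0 subrr.
case: (ltngtP M N.+1) => [MN1|MN1|<-]; last 2 first.
- by move: MN; rewrite leqNgt MN1.
- rewrite subrr big1 // => j _; by rewrite leqNgt ltn_ord.
rewrite !big_ord_recr /= IH // -ltnS MN1 addrAC; congr (_ + _ - _); exact: eq_bigr.
Qed.


Lemma tail_g (g : nat -> C) (d : R) : inH2 g -> 0 < d ->
  exists M, small (fun j => if (M <= j)%N then g j else 0) d.
Proof.
move=> hg hd.
set u := series (fun j => sqmod (g j)).
have nd : {homo u : n m / (n <= m)%N >-> n <= m}.
  by apply: nondecreasing_series => n _ _; exact: sqmod_ge0.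
have hs : forall n, u n = \sum_(j < n) sqmod (g j).
  by move=> n; rewrite /u /series /= big_mkord.
have := hg; move/(cvgrPdist_le _ _) => /(_ _ hd) [M _ HM].
exists M => N; rewrite /psum.
case: (leqP N M) => NM.
  rewrite big1 ?ltW // => j _.
  by rewrite leqNgt (leq_trans (ltn_ord j) NM) sqmod0.
have HMM := HM M (leqnn M); rewrite /= in HMM.
have le1 := nondecreasing_cvgn_le nd hg N.
have -> : \sum_(j < N) sqmod (if (M <= j)%N then g j else 0) = u N - u M.
  rewrite (hs N) (hs M); apply: eq_trans _ (tail_sum (fun j => sqmod (g j)) (ltnW NM)).
  by apply: eq_bigr => j _; case: ifP => // _; exact: sqmod0.
apply: (@le_trans _ _ (limn u - u M)); first by rewrite lerB.
by apply: le_trans (ler_norm _) HMM.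
Qed.



Lemma fk_sum (n j : nat) (c : nat -> C) :
  \sum_(i < n) c i * fk_coef R i.+1 j = Dop (fun j => \sum_(i < n) c i * (U R i.+1 j)%:C%C) j.
Proof.
rewrite /Dop /fk_coef /U; case: j => [|j] /=.
  by rewrite subr0; apply: eq_bigr => i _; rewrite subr0.
rewrite -sumrB; apply: eq_bigr => i _; by rewrite rmorphB mulrBr.
Qed.

Lemma DopB (a b : nat -> C) j : Dop (fun j => a j - b j) j = Dop a j - Dop b j.
Proof. by rewrite /Dop; case: j => [|j]; rewrite ?subr0 //; ring. Qed.

End B.
Lemma count_sum (V : zmodType) (M L N : nat) (s : V) :
  \sum_(j < N) (if (M <= j < M + L)%N then s else 0) = s *+ (minn N (M + L) - M).
Proof.
elim: N => [|N IH]; first by rewrite big_ord0 min0n sub0n mulr0n.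
rewrite big_ord_recr /= IH.
case: (boolP ((M <= N)%N && (N < M + L)%N)) => h.
  rewrite -mulrSr; congr (_ *+ _); move: h => /andP[h1 h2]; lia.
rewrite addr0; congr (_ *+ _).
move: h; rewrite negb_and -!ltnNge => /orP[h|h]; lia.
Qed.



Unset Implicit Arguments.
Theorem mainTheorem12 (R : realType) (g : nat -> R[i]) (hg : inH2 g)
    (eps : R) (heps : 0 < eps) :
  exists (n : nat) (c : 'I_n -> R[i]),
    H2norm2 (fun j => g j - \sum_(i < n) c i * fk_coef R i.+1 j) < eps.
Proof.
set d := eps / 32.
have hd : 0 < d by rewrite divr_gt0.
have [M hM] := tail_g hg hd.
set s := \sum_(j < M) g j.
set L := (Num.trunc (sqmod s / d)).+1.
have hL : sqmod s / d < L%:R := truncnS_gt _.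
have L0 : (0 < L%:R :> R) by rewrite ltr0n.
set cL : R[i] := ((L%:R^-1 : R)%:C)%C * s.
set comp := fun j => if (M <= j < M + L)%N then cL else 0.
set h := fun j => (if (j < M)%N then g j else 0) - comp j.
set w := fun j => \sum_(i < j.+1) h i.
have Dw : forall j, Dop w j = h j.
  case=> [|j]; rewrite /Dop /w; first by rewrite big_ord1 subr0.
  have -> : \sum_(i < j.+2) h i = \sum_(i < j.+1) h i + h j.+1.
    by rewrite big_ord_recr; congr (_ + _); exact: eq_bigr.
  by rewrite addrAC subrr add0r.
have w0 : forall j, (M + L <= j)%N -> w j = 0.
  move=> j hj; rewrite /w /h sumrB.
  have Mj : (M <= j.+1)%N by apply: leq_trans (leq_addr L M) _; exact: leqW.
  rewrite -(sum_widen g Mj) -/s /comp count_sum.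
  have -> : (minn j.+1 (M + L) - M = L)%N by lia.
  rewrite /cL -mulrnAl -rmorphMn -mulr_natl mulfV ?gt_eqF // rmorph1 mul1r.
  by rewrite subrr.
have [v [[n [c hv]] hvw]] := Approx_fin w0 hd.
exists n, (fun i : 'I_n => c i).
apply: (H2_lt (e := 16 * d)); last by rewrite /d; lra.
have hgh : small (fun j => g j - h j) (2 * d + 2 * d).
  have hc : small comp d.
    move=> N; rewrite /psum /comp.
    have -> : \sum_(j < N) sqmod (if (M <= j < M + L)%N then cL else 0)
        = \sum_(j < N) (if (M <= j < M + L)%N then sqmod cL else 0).
      by apply: eq_bigr => j _; case: ifP => // _; exact: sqmod0.
    rewrite count_sum.
    apply: (@le_trans _ _ (sqmod cL *+ L)).
      by rewrite -[X in X <= _]mulr_natl -[X in _ <= X]mulr_natl ler_wpM2r ?sqmod_ge0 // ler_nat; lia.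
    rewrite /cL sqmodM sqmodC.
    set y := _ * sqmod s; rewrite -mulr_natl /y.
    have -> : L%:R * ((L%:R : R)^-1 ^+ 2 * sqmod s) = sqmod s / L%:R.
      by field; rewrite gt_eqF.
    rewrite ler_pdivrMr // mulrC -ler_pdivrMr //; exact: ltW.
  eapply small_ext; last exact: (small_add hM hc).
  move=> j /=; rewrite /h /comp; case: (leqP M j) => Mj.
    by rewrite /=; ring.
  by rewrite /=; ring.
have hD := small_D hvw.
eapply small_le; last first.
  eapply small_ext; last exact: (small_add hgh hD).
  move=> j /=; rewrite DopB Dw hv -fk_sum; ring.
lra.
Qed.
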